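(* Let $X$ be a strictly convex normed plane, let $K_4$ have vertex set $\{v_1,v_2,v_3,v_4\}$, let $e=v_1v_4$, and let $p$ be a placement of $K_4-e$ in 3-cycle general position. Then: (i) every placement $q$ of $K_4-e$ with $\|q_v-q_w\|=\|p_v-p_w\|$ for all edges $vw$ of $K_4-e$ is also in 3-cycle general position; (ii) if $(K_4-e,p)$ is well-positioned, then it is independent.
   Context: A normed plane is a 2-dimensional real normed space. $X$ is strictly convex if $\|tx+(1-t)y\|<1$ for all distinct $x,y$ with $\|x\|=\|y\|=1$ and all $t\in(0,1)$. A placement of $K_4-e$ is in 3-cycle general position if for each of its two triangles $\{v_1,v_2,v_3\}$ and $\{v_2,v_3,v_4\}$ the three image points are affinely independent (not collinear). A nonzero $x\in X$ is smooth if it has exactly one support functional $f\in X^*$ ($\|f\|=\|x\|$, $f(x)=\|x\|^2$), denoted $\varphi(x)$. A placement is well-positioned if $p_v-p_w$ is smooth for every edge $vw$; then $\varphi_{v,w}:=\varphi((p_v-p_w)/\|p_v-p_w\|)$, and the framework is independent if the linear map $X^{V}\to\mathbb{R}^{E}$, $u\mapsto(\varphi_{v,w}(u_v-u_w))_{vw\in E}$, is surjective. *)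

(* Defs.v *)
From Stdlib Require Import Reals.
Open Scope R_scope.

Definition vec : Type := (R * R)%type.
Definition vzero : vec := (0, 0).
Definition vadd (x y : vec) : vec := (fst x + fst y, snd x + snd y).
Definition vscale (c : R) (x : vec) : vec := (c * fst x, c * snd x).
Definition vsub (x y : vec) : vec := vadd x (vscale (-1) y).

(* A norm on R^2 (every 2-dim real normed space is isometric to such). *)
Record is_norm (N : vec -> R) : Prop := {
  norm_def : forall x, N x = 0 -> x = vzero;
  norm_hom : forall c x, N (vscale c x) = Rabs c * N x;
  norm_tri : forall x y, N (vadd x y) <= N x + N y }.

Definition strictly_convex (N : vec -> R) : Prop :=
  forall x y : vec, x <> y -> N x = 1 -> N y = 1 ->
    forall t : R, 0 < t < 1 -> N (vadd (vscale t x) (vscale (1 - t) y)) < 1.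

(* Linear functionals on R^2, represented by their coefficients. *)
Definition functional : Type := (R * R)%type.
Definition fapp (f : functional) (x : vec) : R := fst f * fst x + snd f * snd x.

Definition dual_norm_is (N : vec -> R) (f : functional) (r : R) : Prop :=
  is_lub (fun s => exists y, N y <= 1 /\ s = fapp f y) r.

Definition support_functional (N : vec -> R) (x : vec) (f : functional) : Prop :=
  dual_norm_is N f (N x) /\ fapp f x = (N x) ^ 2.

Definition smooth (N : vec -> R) (x : vec) : Prop :=
  x <> vzero /\ exists! f : functional, support_functional N x f.

Definition normalize (N : vec -> R) (x : vec) : vec := vscale (/ N x) x.

(* The graph K4 - e, with e = v1 v4. *)
Inductive V4 := v1 | v2 | v3 | v4.
Inductive E5 := e12 | e13 | e23 | e24 | e34.
Definition esrc (e : E5) : V4 :=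
  match e with e12 => v1 | e13 => v1 | e23 => v2 | e24 => v2 | e34 => v3 end.
Definition edst (e : E5) : V4 :=
  match e with e12 => v2 | e13 => v3 | e23 => v3 | e24 => v4 | e34 => v4 end.

Definition placement : Type := V4 -> vec.

Definition affinely_independent3 (a b c : vec) : Prop :=
  forall l1 l2 l3 : R, l1 + l2 + l3 = 0 ->
    vadd (vscale l1 a) (vadd (vscale l2 b) (vscale l3 c)) = vzero ->
    l1 = 0 /\ l2 = 0 /\ l3 = 0.

Definition cycle3_general_position (p : placement) : Prop :=
  affinely_independent3 (p v1) (p v2) (p v3) /\
  affinely_independent3 (p v2) (p v3) (p v4).

Definition well_positioned (N : vec -> R) (p : placement) : Prop :=
  forall e : E5, smooth N (vsub (p (esrc e)) (p (edst e))).

(* Independence: the map u |-> (phi_{v,w}(u_v - u_w))_{vw in E} is surjective,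
   where phi_{v,w} is the (unique, under well-positionedness) support
   functional of the normalized edge vector. *)
Definition independent (N : vec -> R) (p : placement) : Prop :=
  forall phi : E5 -> functional,
    (forall e, support_functional N
                 (normalize N (vsub (p (esrc e)) (p (edst e)))) (phi e)) ->
    forall b : E5 -> R, exists u : V4 -> vec,
      forall e, fapp (phi e) (vsub (u (esrc e)) (u (edst e))) = b e.

(* Main.v *)
Require Import Defs.
From Stdlib Require Import Reals Lra Psatz.
Open Scope R_scope.

Definition det (u w : R * R) : R := fst u * snd w - snd u * fst w.

Ltac veq := unfold vsub, vadd, vscale, vzero; simpl; f_equal; ring.

Lemma N0 N (HN : is_norm N) : N vzero = 0.
Proof.
  replace vzero with (vscale 0 vzero) by veq.
  rewrite (norm_hom N HN), Rabs_R0; ring.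
Qed.

Lemma Nopp N (HN : is_norm N) x : N (vscale (-1) x) = N x.
Proof. rewrite (norm_hom N HN). replace (Rabs (-1)) with 1. ring. rewrite Rabs_left; lra. Qed.

Lemma Nnonneg N (HN : is_norm N) x : 0 <= N x.
Proof.
  pose proof (norm_tri N HN x (vscale (-1) x)) as H.
  replace (vadd x (vscale (-1) x)) with vzero in H by veq.
  rewrite N0, Nopp in H by auto. lra.
Qed.

Lemma Npos N (HN : is_norm N) x : x <> vzero -> 0 < N x.
Proof.
  intro Hx. destruct (Nnonneg N HN x) as [H|H]; auto.
  exfalso. apply Hx. apply (norm_def N HN). auto.
Qed.

Lemma Nsym N (HN : is_norm N) a b : N (vsub a b) = N (vsub b a).
Proof.
  replace (vsub a b) with (vscale (-1) (vsub b a)) by veq.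
  apply Nopp; auto.
Qed.

Lemma vsub_neq a b : a <> b -> vsub a b <> vzero.
Proof.
  intros H E. apply H. destruct a, b. unfold vsub, vadd, vscale, vzero in E.
  simpl in E. injection E; intros. f_equal; lra.
Qed.

Lemma Nnormalize N (HN : is_norm N) u : 0 < N u -> N (normalize N u) = 1.
Proof.
  intro H. unfold normalize. rewrite (norm_hom N HN).
  rewrite Rabs_right. field. lra.
  left. apply Rinv_0_lt_compat; auto.
Qed.

Lemma strict_tri N (HN : is_norm N) (Hsc : strictly_convex N) x y :
  det x y <> 0 -> N (vadd x y) < N x + N y.
Proof.
  intro Hd.
  assert (Hx : x <> vzero) by (intro E; subst; apply Hd; unfold det, vzero; simpl; ring).
  assert (Hy : y <> vzero) by (intro E; subst; apply Hd; unfold det, vzero; simpl; ring).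
  pose proof (Npos N HN x Hx) as Ha. pose proof (Npos N HN y Hy) as Hb.
  set (a := N x) in *. set (b := N y) in *.
  assert (Hux : N (vscale (/a) x) = 1) by (apply (Nnormalize N HN x); auto).
  assert (Huy : N (vscale (/b) y) = 1) by (apply (Nnormalize N HN y); auto).
  assert (Hne : vscale (/a) x <> vscale (/b) y).
  { intro E. unfold vscale in E. injection E; intros E2 E1.
    assert (/a * det x y = 0).
    { unfold det. replace (/a * (fst x * snd y - snd x * fst y)) with
        ((/a * fst x) * snd y - (/a * snd x) * fst y) by ring.
      rewrite E1, E2. ring. }
    apply Rmult_integral in H. destruct H as [H|H]; auto.
    apply Rinv_neq_0_compat in H; auto; lra. }
  assert (Ht : 0 < a / (a + b) < 1).
  { split. apply Rdiv_lt_0_compat; lra.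
    apply Rmult_lt_reg_r with (a + b). lra. field_simplify; lra. }
  pose proof (Hsc _ _ Hne Hux Huy _ Ht) as H.
  replace (vadd (vscale (a / (a + b)) (vscale (/ a) x))
            (vscale (1 - a / (a + b)) (vscale (/ b) y)))
    with (vscale (/ (a + b)) (vadd x y)) in H
    by (unfold vscale, vadd; simpl; f_equal; field; lra).
  rewrite (norm_hom N HN), Rabs_right in H.
  2: { left. apply Rinv_0_lt_compat; lra. }
  apply Rmult_lt_reg_l with (/ (a + b)). apply Rinv_0_lt_compat; lra.
  replace (/ (a + b) * (a + b)) with 1 by (field; lra). lra.
Qed.

Lemma par_ex u v : det u v = 0 -> (fst u <> 0 \/ snd u <> 0) ->
  exists s, fst v = s * fst u /\ snd v = s * snd u.
Proof.
  unfold det. intros H [H1|H1].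
  - exists (fst v / fst u). split. field; auto.
    apply Rmult_eq_reg_l with (fst u); auto. field_simplify; auto. lra.
  - exists (snd v / snd u). split.
    apply Rmult_eq_reg_l with (snd u); auto. field_simplify; auto. lra.
    field; auto.
Qed.

Lemma tri_nondeg N (HN : is_norm N) (Hsc : strictly_convex N) A B C A' B' C' :
  det (vsub B A) (vsub C A) <> 0 ->
  N (vsub A' B') = N (vsub A B) -> N (vsub A' C') = N (vsub A C) ->
  N (vsub B' C') = N (vsub B C) ->
  det (vsub B' A') (vsub C' A') <> 0.
Proof.
  intros Hd EAB EAC EBC.
  assert (T1 : N (vsub B C) < N (vsub A B) + N (vsub A C)).
  { replace (vsub B C) with (vadd (vsub B A) (vsub A C)) by veq.
    rewrite (Nsym N HN A B). apply strict_tri; auto.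
    intro E; apply Hd; unfold det, vsub, vadd, vscale in *; simpl in *; lra. }
  assert (T2 : N (vsub A B) < N (vsub A C) + N (vsub B C)).
  { replace (vsub A B) with (vadd (vsub A C) (vsub C B)) by veq.
    rewrite (Nsym N HN B C). apply strict_tri; auto.
    intro E; apply Hd; unfold det, vsub, vadd, vscale in *; simpl in *; lra. }
  assert (T3 : N (vsub A C) < N (vsub A B) + N (vsub B C)).
  { replace (vsub A C) with (vadd (vsub A B) (vsub B C)) by veq.
    apply strict_tri; auto.
    intro E; apply Hd; unfold det, vsub, vadd, vscale in *; simpl in *; lra. }
  assert (PAB : 0 < N (vsub A B)).
  { apply Npos; auto. apply vsub_neq. intro E; subst; apply Hd.
    unfold det, vsub, vadd, vscale; simpl; ring. }
  intro D0.
  destruct (Req_dec (fst (vsub B' A')) 0) as [Z1|Z1];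
  [destruct (Req_dec (snd (vsub B' A')) 0) as [Z2|Z2]|].
  - assert (vsub A' B' = vzero).
    { unfold vsub, vadd, vscale, vzero in *; simpl in *; f_equal; lra. }
    rewrite H, N0 in EAB; auto. lra.
  - destruct (par_ex _ _ D0 (or_intror Z2)) as [s [S1 S2]].
    assert (E1 : vsub A' C' = vscale s (vsub A' B')).
    { unfold vsub, vadd, vscale in *; simpl in *; f_equal; lra. }
    assert (E2 : vsub B' C' = vscale (s - 1) (vsub A' B')).
    { unfold vsub, vadd, vscale in *; simpl in *; f_equal; lra. }
    rewrite E1, (norm_hom N HN) in EAC. rewrite E2, (norm_hom N HN) in EBC.
    rewrite EAB in EAC, EBC.
    unfold Rabs in EAC, EBC; destruct (Rcase_abs s); destruct (Rcase_abs (s-1)); nra.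
  - destruct (par_ex _ _ D0 (or_introl Z1)) as [s [S1 S2]].
    assert (E1 : vsub A' C' = vscale s (vsub A' B')).
    { unfold vsub, vadd, vscale in *; simpl in *; f_equal; lra. }
    assert (E2 : vsub B' C' = vscale (s - 1) (vsub A' B')).
    { unfold vsub, vadd, vscale in *; simpl in *; f_equal; lra. }
    rewrite E1, (norm_hom N HN) in EAC. rewrite E2, (norm_hom N HN) in EBC.
    rewrite EAB in EAC, EBC.
    unfold Rabs in EAC, EBC; destruct (Rcase_abs s); destruct (Rcase_abs (s-1)); nra.
Qed.

Lemma det_ai a b c : det (vsub b a) (vsub c a) <> 0 -> affinely_independent3 a b c.
Proof.
  intros Hd l1 l2 l3 Hs Hv.
  pose proof (f_equal fst Hv) as E1. pose proof (f_equal snd Hv) as E2.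
  unfold vadd, vscale, vzero in E1, E2; simpl in E1, E2.
  assert (l1 = -l2 - l3) by lra. subst l1.
  assert (F1 : l2 * (fst b - fst a) + l3 * (fst c - fst a) = 0) by lra.
  assert (F2 : l2 * (snd b - snd a) + l3 * (snd c - snd a) = 0) by lra.
  assert (G2 : l2 * det (vsub b a) (vsub c a) = 0).
  { unfold det, vsub, vadd, vscale; simpl.
    replace (l2 * ((fst b + -1 * fst a) * (snd c + -1 * snd a) -
       (snd b + -1 * snd a) * (fst c + -1 * fst a)))
      with ((l2 * (fst b - fst a) + l3 * (fst c - fst a)) * (snd c - snd a)
            - (l2 * (snd b - snd a) + l3 * (snd c - snd a)) * (fst c - fst a)) by ring.
    rewrite F1, F2; ring. }
  assert (G3 : l3 * det (vsub b a) (vsub c a) = 0).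
  { unfold det, vsub, vadd, vscale; simpl.
    replace (l3 * ((fst b + -1 * fst a) * (snd c + -1 * snd a) -
       (snd b + -1 * snd a) * (fst c + -1 * fst a)))
      with ((l2 * (snd b - snd a) + l3 * (snd c - snd a)) * (fst b - fst a)
            - (l2 * (fst b - fst a) + l3 * (fst c - fst a)) * (snd b - snd a)) by ring.
    rewrite F1, F2; ring. }
  apply Rmult_integral in G2. apply Rmult_integral in G3.
  destruct G2 as [G2|G2]; [|contradiction]. destruct G3 as [G3|G3]; [|contradiction].
  subst. lra.
Qed.

Lemma ai_det a b c : affinely_independent3 a b c -> det (vsub b a) (vsub c a) <> 0.
Proof.
  intros H D0.
  set (u1 := fst (vsub b a)) in *. set (u2 := snd (vsub b a)) in *.
  set (w1 := fst (vsub c a)) in *. set (w2 := snd (vsub c a)) in *.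
  assert (key : forall l2 l3, l2 * u1 + l3 * w1 = 0 -> l2 * u2 + l3 * w2 = 0 ->
                 l2 = 0 /\ l3 = 0).
  { intros l2 l3 K1 K2.
    destruct (H (-l2 - l3) l2 l3) as [_ HH]; [lra| |exact HH].
    unfold u1, u2, w1, w2, vsub, vadd, vscale, vzero in *; simpl in *.
    f_equal; lra. }
  unfold det in D0. fold u1 u2 w1 w2 in D0.
  destruct (Req_dec w2 0); destruct (Req_dec u2 0).
  - destruct (key w1 (-u1)) as [K1 K2]; try lra.
    destruct (key 1 0) as [K3 K4]; lra.
  - destruct (key w2 (-u2)); lra.
  - destruct (key w2 (-u2)); lra.
  - destruct (key w2 (-u2)); lra.
Qed.

Lemma fapp_scale f c x : fapp f (vscale c x) = c * fapp f x.
Proof. unfold fapp, vscale; simpl; ring. Qed.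
Lemma fapp_add f x y : fapp f (vadd x y) = fapp f x + fapp f y.
Proof. unfold fapp, vadd; simpl; ring. Qed.
Lemma fapp_sub f x y : fapp f (vsub x y) = fapp f x - fapp f y.
Proof. unfold fapp, vsub, vadd, vscale; simpl; ring. Qed.
Lemma fapp_zero f : fapp f vzero = 0.
Proof. unfold fapp, vzero; simpl; ring. Qed.

Lemma supp_bound N x f : N x = 1 -> support_functional N x f ->
  forall z, N z <= 1 -> fapp f z <= 1.
Proof.
  intros Hx [[Hub _] _] z Hz. rewrite <- Hx. apply Hub. exists z; auto.
Qed.

Lemma supp_val N x f : N x = 1 -> support_functional N x f -> fapp f x = 1.
Proof. intros Hx [_ H]. rewrite H, Hx. ring. Qed.

Lemma no_two N (HN : is_norm N) (Hsc : strictly_convex N) x y f :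
  N x = 1 -> N y = 1 -> x <> y -> (forall z, N z <= 1 -> fapp f z <= 1) ->
  fapp f x = 1 -> fapp f y = 1 -> False.
Proof.
  intros Hx Hy Hne Hb fx fy.
  assert (Ht : 0 < 1/2 < 1) by lra.
  pose proof (Hsc x y Hne Hx Hy _ Ht) as Hm.
  set (m := vadd (vscale (1/2) x) (vscale (1 - 1/2) y)) in *.
  assert (fm : fapp f m = 1) by (unfold m; rewrite fapp_add, !fapp_scale; lra).
  assert (Pm : 0 < N m).
  { apply Npos; auto. intro E. rewrite E, fapp_zero in fm. lra. }
  assert (Nz : N (vscale (/ N m) m) <= 1).
  { rewrite (norm_hom N HN), Rabs_right. right; field; lra.
    left; apply Rinv_0_lt_compat; auto. }
  pose proof (Hb _ Nz) as H. rewrite fapp_scale, fm in H.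
  assert (N m * / N m = 1) by (field; lra).
  nra.
Qed.

Lemma supp_det N (HN : is_norm N) (Hsc : strictly_convex N) x y f g :
  N x = 1 -> N y = 1 -> x <> y -> x <> vscale (-1) y ->
  support_functional N x f -> support_functional N y g -> det f g <> 0.
Proof.
  intros Hx Hy Hne1 Hne2 Sf Sg D0.
  pose proof (supp_bound N x f Hx Sf) as Bf.
  pose proof (supp_bound N y g Hy Sg) as Bg.
  pose proof (supp_val N x f Hx Sf) as fx.
  pose proof (supp_val N y g Hy Sg) as gy.
  assert (fnz : fst f <> 0 \/ snd f <> 0).
  { destruct (Req_dec (fst f) 0); [destruct (Req_dec (snd f) 0)|]; auto.
    exfalso. unfold fapp in fx. rewrite H, H0 in fx. lra. }
  assert (D0' : det f g = 0) by exact D0.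
  destruct (par_ex f g D0' fnz) as [c [C1 C2]].
  assert (Hg : forall z, fapp g z = c * fapp f z)
    by (intro z; unfold fapp; rewrite C1, C2; ring).
  assert (Nmx : N (vscale (-1) x) <= 1) by (rewrite (Nopp N HN); lra).
  assert (Nmy : N (vscale (-1) y) <= 1) by (rewrite (Nopp N HN); lra).
  pose proof (Bg x (Req_le _ _ Hx)) as h1. rewrite Hg, fx in h1.
  pose proof (Bg _ Nmx) as h2. rewrite Hg, fapp_scale, fx in h2.
  pose proof (Bf y (Req_le _ _ Hy)) as h3.
  pose proof (Bf _ Nmy) as h4. rewrite fapp_scale in h4.
  rewrite Hg in gy.
  assert (c * c = 1).
  { assert (c*c <= 1) by nra.
    assert (fapp f y * fapp f y <= 1) by nra.
    assert ((c*fapp f y)*(c*fapp f y) = 1) by (rewrite gy; ring).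
    assert (c*c*(1 - fapp f y * fapp f y) >= 0) by (apply Rle_ge, Rmult_le_pos; nra).
    nra. }
  assert (Hc : c = 1 \/ c = -1).
  { assert ((c-1)*(c+1) = 0) by nra. apply Rmult_integral in H0.
    destruct H0; [left|right]; lra. }
  destruct Hc; subst c.
  - apply (no_two N HN Hsc x y f); auto. lra.
  - apply (no_two N HN Hsc x (vscale (-1) y) f); auto.
    rewrite (Nopp N HN); auto. rewrite fapp_scale. lra.
Qed.

Lemma dir_lemma N (HN : is_norm N) u w : 0 < N u -> 0 < N w -> det u w <> 0 ->
  normalize N u <> normalize N w /\ normalize N u <> vscale (-1) (normalize N w).
Proof.
  intros Ha Hb Hd. set (a := N u) in *. set (b := N w) in *.
  assert (Hab : /a * /b <> 0).
  { apply Rmult_integral_contrapositive; split; apply Rinv_neq_0_compat; lra. }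
  unfold normalize, vscale. fold a b. split; intro E; injection E; intros E2 E1.
  - apply Hd. apply Rmult_eq_reg_l with (/a * /b); auto.
    unfold det. replace (/ a * / b * (fst u * snd w - snd u * fst w)) with
      ((/a * fst u) * (/b * snd w) - (/a * snd u) * (/b * fst w)) by ring.
    rewrite E1, E2. ring.
  - apply Hd. apply Rmult_eq_reg_l with (/a * /b); auto.
    unfold det. replace (/ a * / b * (fst u * snd w - snd u * fst w)) with
      ((/a * fst u) * (/b * snd w) - (/a * snd u) * (/b * fst w)) by ring.
    rewrite E1, E2. ring.
Qed.

Lemma cramer f g : det f g <> 0 -> forall r s, exists z, fapp f z = r /\ fapp g z = s.
Proof.
  unfold det. intros D r s.
  exists ((r * snd g - s * snd f) / (fst f * snd g - snd f * fst g),
          (fst f * s - fst g * r) / (fst f * snd g - snd f * fst g)).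
  unfold fapp; simpl. split; field; auto.
Qed.

Lemma neq_from_det a b c : det (vsub b a) (vsub c a) <> 0 -> a <> b /\ a <> c /\ b <> c.
Proof.
  intro H. split; [|split]; intro E; subst; apply H; unfold det, vsub, vadd, vscale; simpl; ring.
Qed.

Theorem mainTheorem18 (N : vec -> R) (HN : is_norm N) (Hsc : strictly_convex N)
  (p : placement) (Hp : cycle3_general_position p) :
  (forall q : placement,
     (forall e : E5, N (vsub (q (esrc e)) (q (edst e))) = N (vsub (p (esrc e)) (p (edst e)))) ->
     cycle3_general_position q) /\
  (well_positioned N p -> independent N p).
Proof.
  destruct Hp as [H1 H2].
  pose proof (ai_det _ _ _ H1) as D1. pose proof (ai_det _ _ _ H2) as D2.
  split.
  - intros q Hq.
    pose proof (Hq e12) as h12. pose proof (Hq e13) as h13. pose proof (Hq e23) as h23.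
    pose proof (Hq e24) as h24. pose proof (Hq e34) as h34.
    cbn [esrc edst] in h12, h13, h23, h24, h34.
    split; apply det_ai.
    + apply (tri_nondeg N HN Hsc (p v1) (p v2) (p v3)); auto.
    + apply (tri_nondeg N HN Hsc (p v2) (p v3) (p v4)); auto.
  - intros _ phi Hphi b.
    destruct (neq_from_det _ _ _ D1) as [n12 [n13 n23]].
    destruct (neq_from_det _ _ _ D2) as [_ [n24 n34]].
    assert (P : forall e, 0 < N (vsub (p (esrc e)) (p (edst e)))).
    { intro e; apply Npos; auto; apply vsub_neq; destruct e; cbn [esrc edst]; auto. }
    assert (U : forall e, N (normalize N (vsub (p (esrc e)) (p (edst e)))) = 1)
      by (intro e; apply Nnormalize; auto).
    assert (F1 : det (phi e12) (phi e13) <> 0).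
    { destruct (dir_lemma N HN (vsub (p v1) (p v2)) (vsub (p v1) (p v3)))
        as [d1 d2]; try apply (P e12); try apply (P e13).
      intro E; apply D1; unfold det, vsub, vadd, vscale in *; simpl in *; lra.
      apply (supp_det N HN Hsc _ _ _ _ (U e12) (U e13) d1 d2 (Hphi e12) (Hphi e13)). }
    assert (F4 : det (phi e24) (phi e34) <> 0).
    { destruct (dir_lemma N HN (vsub (p v2) (p v4)) (vsub (p v3) (p v4)))
        as [d1 d2]; try apply (P e24); try apply (P e34).
      intro E; apply D2; unfold det, vsub, vadd, vscale in *; simpl in *; lra.
      apply (supp_det N HN Hsc _ _ _ _ (U e24) (U e34) d1 d2 (Hphi e24) (Hphi e34)). }
    pose proof (supp_val _ _ _ (U e23) (Hphi e23)) as V23.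
    set (x23 := normalize N (vsub (p (esrc e23)) (p (edst e23)))) in *.
    set (u3 := vscale (- b e23) x23).
    destruct (cramer _ _ F1 (b e12 + fapp (phi e12) vzero) (b e13 + fapp (phi e13) u3))
      as [z1 [Z1 Z2]].
    destruct (cramer _ _ F4 (fapp (phi e24) vzero - b e24) (fapp (phi e34) u3 - b e34))
      as [z4 [Z3 Z4]].
    exists (fun v => match v with v1 => z1 | v2 => vzero | v3 => u3 | v4 => z4 end).
    intro e; destruct e; cbn [esrc edst]; rewrite fapp_sub; try lra.
    unfold u3. rewrite fapp_zero, fapp_scale, V23. ring.
Qed.
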